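(* Let $T$ be an out-directed tree with $l$ out-leaves. Then there is a symmetric out-directed tree $T'$ such that $T$ is a subgraph of $T'$, $T'$ has at most $l^l$ out-leaves, and $|T'|\le l^l|T|$.
   Context: An out-directed tree is an oriented tree (underlying graph a tree, no bidirected edges) with a root $r$ such that all edges are directed away from $r$. An out-leaf is a vertex of out-degree $0$. An out-directed tree with root $r$ is symmetric if for every $i\ge 0$ all vertices at distance $i$ from $r$ have the same out-degree. $|T|$ is the number of vertices. *)

(* Defs.v *)
From mathcomp Require Import all_boot.
Set Implicit Arguments. Unset Strict Implicit. Unset Printing Implicit Defensive.

Section Digraphs.
Variables (V : finType) (E : rel V).

Definition n_edges : nat := #|[set p : V * V | E p.1 p.2]|.

Definition und_adj : rel V := fun u v => E u v || E v u.

Definition oriented : Prop := forall u v, E u v -> ~~ E v u.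

(* the underlying (simple) graph is a tree: connected with |V|-1 edges
   (since E is oriented, directed edges = undirected edges) *)
Definition underlying_tree : Prop :=
  (forall u v, connect und_adj u v) /\ n_edges = #|V| - 1.

(* out-directed tree with root r: oriented tree, all edges directed away from r,
   i.e. every vertex is reached from r along directed edges *)
Definition out_tree (r : V) : Prop :=
  oriented /\ underlying_tree /\ (forall v, connect E r v).

Fixpoint dwalk (i : nat) (u v : V) : bool :=
  if i is i'.+1 then [exists w, E u w && dwalk i' w v] else u == v.

Definition at_dist (r : V) (i : nat) (v : V) : Prop :=
  dwalk i r v /\ forall j, j < i -> ~~ dwalk j r v.

Definition outdeg (v : V) : nat := #|[set w | E v w]|.

Definition out_leaves : {set V} := [set v | outdeg v == 0].

Definition n_out_leaves : nat := #|out_leaves|.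

Definition symmetric_out_tree (r : V) : Prop :=
  out_tree r /\
  forall i u v, at_dist r i u -> at_dist r i v -> outdeg u = outdeg v.

End Digraphs.

Definition subgraph_of (V : finType) (E : rel V) (V' : finType) (E' : rel V') : Prop :=
  exists f : V -> V', injective f /\ forall u v, E u v -> E' (f u) (f v).

(* Main.v *)
Require Import Defs.
From mathcomp Require Import all_boot.
From mathcomp Require Import zify.
Set Implicit Arguments. Unset Strict Implicit. Unset Printing Implicit Defensive.

Lemma dwalk0 (V : finType) (E : rel V) u v : dwalk E 0 u v = (u == v).
Proof. by []. Qed.
Lemma dwalkC (V : finType) (E : rel V) i u v :
  dwalk E i.+1 u v = [exists w, E u w && dwalk E i w v].
Proof. by []. Qed.

Lemma dwalkS (V : finType) (E : rel V) i u v :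
  dwalk E i.+1 u v = [exists w, dwalk E i u w && E w v].
Proof.
elim: i u => [|i IH] u.
  rewrite dwalkC; apply/existsP/existsP.
    by move=> [w]; rewrite dwalk0 => /andP[Euw /eqP <-]; exists u; rewrite dwalk0 eqxx Euw.
  by move=> [w]; rewrite dwalk0 => /andP[/eqP <- Euw]; exists v; rewrite dwalk0 eqxx Euw.
rewrite dwalkC; apply/existsP/existsP.
  move=> [w /andP[Euw]]; rewrite IH => /existsP[x /andP[Hwx Exv]].
  by exists x; rewrite Exv andbT dwalkC; apply/existsP; exists w; rewrite Euw.
move=> [x /andP[]]; rewrite dwalkC => /existsP[w /andP[Euw Hwx]] Exv.
by exists w; rewrite Euw andTb IH; apply/existsP; exists x; rewrite Hwx.
Qed.

Lemma dwalk_add (V : finType) (E : rel V) i j u v :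
  dwalk E (i + j) u v -> exists w, dwalk E i u w /\ dwalk E j w v.
Proof.
elim: i u => [|i IH] u /=; first by move=> H; exists u; rewrite eqxx.
move=> /existsP[w /andP[Euw /IH[x [H1 H2]]]].
by exists x; split => //; apply/existsP; exists w; rewrite Euw.
Qed.

Lemma dwalk_connect (V : finType) (E e : rel V) i u v :
  subrel E e -> dwalk E i u v -> connect e u v.
Proof.
move=> sub; elim: i u => [|i IH] u /=; first by move/eqP->.
move=> /existsP[w /andP[Euw /IH]]; apply: connect_trans; exact/connect1/sub.
Qed.

Lemma connect_dwalk (V : finType) (E : rel V) u v :
  connect E u v -> exists i, dwalk E i u v.
Proof.
move=> /connectP[p Hp ->]; exists (size p).
elim: p u Hp => [|x p IH] u /=; first by [].
by move=> /andP[Eux Hp]; apply/existsP; exists x; rewrite Eux IH.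
Qed.

Definition ptree (V : finType) (E : rel V) (r : V) : Prop :=
  [/\ forall v, exists i, dwalk E i r v, forall u, ~~ E u r &
      forall u u' v, E u v -> E u' v -> u = u'].

Lemma ptree_uniq (V : finType) (E : rel V) r i j v :
  ptree E r -> dwalk E i r v -> dwalk E j r v -> i = j.
Proof.
move=> [_ Hr Hu]; elim: i j v => [|i IH] [|j] v //.
- rewrite dwalk0 => /eqP <-; rewrite dwalkS => /existsP[w /andP[_ Ewr]].
  by move: (Hr w); rewrite Ewr.
- rewrite dwalkS => /existsP[w /andP[_ Ewr]]; rewrite dwalk0 => /eqP Hv; subst v.
  by move: (Hr w); rewrite Ewr.
rewrite !dwalkS => /existsP[w /andP[Hw Ewv]] /existsP[w' /andP[Hw' Ewv']].
by rewrite (IH j w) // (Hu w w' v).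
Qed.
Lemma card_sumE (T : finType) (P : pred T) : #|[set x | P x]| = \sum_x (P x : nat).
Proof.
rewrite -sum1_card big_mkcond /=; apply: eq_bigr => x _; rewrite inE; by case: (P x).
Qed.

Lemma n_edges_sum (V : finType) (E : rel V) :
  n_edges E = \sum_u \sum_v (E u v : nat).
Proof.
rewrite /n_edges card_sumE pair_big /=; apply: eq_bigr => -[u v] //.
Qed.

Definition indeg (V : finType) (E : rel V) v := #|[set u | E u v]|.

Lemma n_edges_out (V : finType) (E : rel V) : n_edges E = \sum_u outdeg E u.
Proof. by rewrite n_edges_sum; apply: eq_bigr => u _; rewrite /outdeg card_sumE. Qed.

Lemma n_edges_in (V : finType) (E : rel V) : n_edges E = \sum_v indeg E v.
Proof.
rewrite n_edges_sum exchange_big; apply: eq_bigr => v _; by rewrite /indeg card_sumE.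
Qed.

Lemma ptree_indeg (V : finType) (E : rel V) r v :
  ptree E r -> indeg E v = (v != r).
Proof.
move=> [Hre Hr Hu]; case: eqP => [->|/eqP vr].
  apply/eqP; rewrite cards_eq0; apply/eqP/setP => u; rewrite !inE; exact/negbTE/Hr.
have [i Hi] := Hre v; case: i Hi => [|i]; first by rewrite dwalk0 eq_sym (negbTE vr).
rewrite dwalkS => /existsP[w /andP[_ Ewv]].
apply/eqP; rewrite eqn_leq; apply/andP; split.
  apply/card_le1_eqP => x y; rewrite !inE => Hx Hy; exact: Hu Hy Hx.
by rewrite /= /indeg card_gt0; apply/set0Pn; exists w; rewrite inE.
Qed.

Lemma ptree_out_tree (V : finType) (E : rel V) r : ptree E r -> out_tree E r.
Proof.
move=> P; have [Hre Hr Hu] := P.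
have reach v : connect E r v by have [i Hi] := Hre v; exact: dwalk_connect Hi.
split; last split; last by [].
- move=> u v Euv; apply/negP => Evu.
  have [i Hi] := Hre u.
  have H1 : dwalk E i.+1 r v by rewrite dwalkS; apply/existsP; exists u; rewrite Hi Euv.
  have H2 : dwalk E i.+2 r u by rewrite dwalkS; apply/existsP; exists v; rewrite H1 Evu.
  by have := ptree_uniq P Hi H2; lia.
split.
  have cs : connect_sym (und_adj E) by apply: sym_connect_sym => x y; rewrite /und_adj orbC.
  have ru v : connect (und_adj E) r v.
    have [i Hi] := Hre v; apply: dwalk_connect Hi => x y Exy; by rewrite /und_adj Exy.
  move=> u v; apply: connect_trans (ru v); by rewrite cs.
rewrite n_edges_in (eq_bigr (fun v => (v != r) : nat)) => [|v _]; last exact: ptree_indeg.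
rewrite subn1 -(cardC1 r) -sum1_card [RHS]big_mkcond /=; apply: eq_bigr => v _; by rewrite inE; case: (v != r).
Qed.

Lemma sum_eq_le (T : finType) (F G : T -> nat) :
  (forall x, F x <= G x) -> \sum_x G x = \sum_x F x -> forall x, G x = F x.
Proof.
move=> le eqs x; move: eqs; rewrite (bigD1 x) // [X in _ = X](bigD1 x) //=.
have : \sum_(i | i != x) F i <= \sum_(i | i != x) G i by apply: leq_sum.
have := le x; lia.
Qed.

Lemma out_tree_ptree (V : finType) (E : rel V) r : out_tree E r -> ptree E r.
Proof.
move=> [_ [[_ Hn] Hc]].
have Hre v : exists i, dwalk E i r v by exact: connect_dwalk.
have le v : ((v != r) : nat) <= indeg E v.
  case: eqP => //= /eqP vr; have [i Hi] := Hre v.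
  case: i Hi => [|i]; first by rewrite dwalk0 eq_sym (negbTE vr).
  rewrite dwalkS => /existsP[w /andP[_ Ewv]].
  by rewrite /indeg card_gt0; apply/set0Pn; exists w; rewrite inE.
have eq := sum_eq_le le.
have Hind v : indeg E v = (v != r).
  apply: eq; rewrite -n_edges_in Hn subn1 -(cardC1 r) -sum1_card [LHS]big_mkcond /=.
  apply: eq_bigr => x _; by rewrite inE; case: (x != r).
split => //.
  move=> u; apply/negP => Eur; have := Hind r; rewrite eqxx /indeg => /eqP.
  by rewrite cards_eq0 => /eqP/setP/(_ u); rewrite !inE Eur.
move=> u u' v Euv Eu'v; have := Hind v; case: (v != r) => /= H.
  have : #|[set x | E x v]| <= 1 by rewrite -/(indeg E v) H.
  move/card_le1_eqP => H1; apply: H1; by rewrite inE.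
move/eqP: H; rewrite cards_eq0 => /eqP/setP/(_ u); by rewrite !inE Euv.
Qed.

Fixpoint VT (ds : seq nat) : finType :=
  if ds is d :: ds' then (option ('I_d * VT ds') : finType) else (unit : finType).

Definition vroot (ds : seq nat) : VT ds :=
  match ds return VT ds with [::] => tt | _ :: _ => None end.

Fixpoint ER (ds : seq nat) : rel (VT ds) :=
  match ds return rel (VT ds) with
  | [::] => fun _ _ => false
  | d :: ds' => fun x y =>
     match x, y with
     | None, Some (c, w) => w == vroot ds'
     | Some (c, w), Some (c', w') => (c == c') && ER w w'
     | _, _ => false
     end
  end.

Lemma dwalk_Some d ds (i : nat) (c : 'I_d) (x : VT ds) (y : VT (d :: ds)) :
  dwalk (@ER (d :: ds)) i (Some (c, x) : VT (d :: ds)) y ->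
  exists y', y = (Some (c, y') : VT (d :: ds)) /\ dwalk (@ER ds) i x y'.
Proof.
elim: i x => [|i IH] x.
  by rewrite dwalk0 => /eqP <-; exists x; rewrite dwalk0 eqxx.
rewrite dwalkC => /existsP[[[c' w]|]] /andP[] //= /andP[/eqP <- Exw] /IH[y' [-> H]].
by exists y'; split => //; apply/existsP; exists w; rewrite Exw.
Qed.

Lemma Some_dwalk d ds (i : nat) (c : 'I_d) (x y : VT ds) :
  dwalk (@ER ds) i x y -> dwalk (@ER (d :: ds)) i (Some (c, x) : VT (d :: ds)) (Some (c, y) : VT (d :: ds)).
Proof.
elim: i x => [|i IH] x.
  by rewrite !dwalk0 => /eqP ->.
rewrite !dwalkC => /existsP[w /andP[Exw /IH H]].
by apply/existsP; exists (Some (c, w)); rewrite H andbT /= eqxx Exw.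
Qed.

Lemma VT_ptree ds : ptree (@ER ds) (vroot ds).
Proof.
elim: ds => [|d ds [IHre IHr IHu]].
  by split => //; case; exists 0.
split.
- case => [[c w]|]; last by exists 0.
  have [i Hi] := IHre w; exists i.+1; rewrite dwalkC; apply/existsP.
  by exists (Some (c, vroot ds)); rewrite /= eqxx /=; apply: Some_dwalk.
- by case => [[c w]|].
move=> u u' [[c w]|]; last by case: u => [[? ?]|].
case: u => [[c1 w1]|]; case: u' => [[c2 w2]|] //=.
- by move=> /andP[/eqP <- E1] /andP[/eqP <- E2]; rewrite (IHu _ _ _ E1 E2).
- by move=> /andP[_ E1] /eqP wr; move: E1; rewrite wr (negbTE (IHr _)).
- by move=> /eqP wr /andP[_ E1]; move: E1; rewrite wr (negbTE (IHr _)).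
Qed.

Lemma outdeg_None d ds : outdeg (@ER (d :: ds)) None = d.
Proof.
rewrite /outdeg.
have -> : [set y | @ER (d :: ds) None y] =
          [set (Some (c, vroot ds) : VT (d :: ds)) | c : 'I_d].
  apply/setP => -[[c w]|]; rewrite !inE.
    apply/eqP/imsetP => [->|[c' _ [_ ->]]] //; by exists c.
  by apply/esym/imsetP => -[].
by rewrite card_imset ?card_ord // => c c' [].
Qed.

Lemma outdeg_Some d ds (c : 'I_d) (x : VT ds) :
  outdeg (@ER (d :: ds)) (Some (c, x)) = outdeg (@ER ds) x.
Proof.
rewrite /outdeg.
have -> : [set y | @ER (d :: ds) (Some (c, x)) y] =
          [set (Some (c, w) : VT (d :: ds)) | w in [set w | @ER ds x w]].
  apply/setP => -[[c' w]|]; rewrite !inE.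
    apply/andP/imsetP => [[/eqP <- Exw]|[w' Hw' [-> ->]]].
      by exists w; rewrite // inE.
    by split; rewrite ?eqxx //; move: Hw'; rewrite inE.
  by apply/esym/imsetP => -[].
by rewrite card_imset // => w w' [].
Qed.

Lemma VT_level ds i (x : VT ds) :
  dwalk (@ER ds) i (vroot ds) x -> outdeg (@ER ds) x = nth 0 ds i.
Proof.
elim: ds i x => [|d ds IH] i x.
  move=> _; rewrite nth_nil /outdeg; apply/eqP; rewrite cards_eq0; apply/eqP/setP => y.
  by rewrite !inE.
case: i => [|i].
  by rewrite dwalk0 => /eqP <-; rewrite outdeg_None.
rewrite dwalkC => /existsP[[[c w]|]] /andP[] // /eqP -> /dwalk_Some[y [-> Hy]].
by rewrite outdeg_Some (IH _ _ Hy).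
Qed.

Lemma VT_card ds : all (fun d => 0 < d) ds ->
  #|VT ds| <= (size ds).+1 * \prod_(d <- ds) d.
Proof.
elim: ds => [|d ds IH]; first by rewrite big_nil /= card_unit.
move=> /= /andP[d0 /IH H]; rewrite card_option card_prod card_ord big_cons.
have : 0 < #|VT ds| by apply/card_gt0P; exists (vroot ds).
move: H; set P := \prod_(_ <- _) _; set m := #|_| => H m0.
have P0 : 0 < P by move: H; case: P => //; rewrite muln0; lia.
have H2 : d * m <= d * ((size ds).+1 * P) by rewrite leq_mul2l H orbT.
have H3 : 0 < d * P by rewrite muln_gt0 d0 P0.
move: H2 H3; set s := size ds; set x := d * P; nia.
Qed.

Lemma VT_leaves ds : all (fun d => 0 < d) ds ->
  n_out_leaves (@ER ds) <= \prod_(d <- ds) d.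
Proof.
elim: ds => [|d ds IH].
  by rewrite big_nil /n_out_leaves => _; apply: leq_trans (max_card _) _; rewrite card_unit.
move=> /= /andP[d0 /IH H]; rewrite big_cons /n_out_leaves.
have sub : out_leaves (@ER (d :: ds)) \subset
    [set (Some p : VT (d :: ds)) | p in setX [set: 'I_d] (out_leaves (@ER ds))].
  apply/subsetP => -[[c w]|]; rewrite inE.
    by rewrite outdeg_Some => Hw; apply/imsetP; exists (c, w) => //; rewrite inE /= in_setT inE.
  by rewrite outdeg_None => /eqP d00; move: d0; rewrite d00.
apply: leq_trans (subset_leq_card sub) _; apply: leq_trans (leq_imset_card _ _) _.
by rewrite cardsX cardsT card_ord leq_mul2l H orbT.
Qed.

Definition parent (V : finType) (E : rel V) (r v : V) := odflt r [pick u | E u v].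
Definition kids (V : finType) (E : rel V) (v : V) := enum [set w | E v w].

Lemma size_kids (V : finType) (E : rel V) v : size (kids E v) = outdeg E v.
Proof. by rewrite /kids -cardE. Qed.

Lemma mem_kids (V : finType) (E : rel V) v w : (w \in kids E v) = E v w.
Proof. by rewrite /kids mem_enum inE. Qed.

Lemma parent_walk (V : finType) (E : rel V) r k v :
  ptree E r -> dwalk E k.+1 r v -> dwalk E k r (parent E r v) /\ E (parent E r v) v.
Proof.
move=> [_ _ Hu]; rewrite dwalkS => /existsP[w /andP[Hw Ewv]].
rewrite /parent; case: pickP => [u Euv|/(_ w)]; last by rewrite Ewv.
by rewrite /= (Hu u w v Euv Ewv).
Qed.

Section Emb.
Variables (V V' : finType) (E : rel V) (E' : rel V') (r : V) (r' : V').
Hypotheses (P : ptree E r) (P' : ptree E' r').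
Hypothesis Hdeg : forall k u w x, dwalk E k r u -> E u w -> dwalk E' k r' x ->
  outdeg E u <= outdeg E' x.

Fixpoint emb (k : nat) (v : V) : V' :=
  if k is k'.+1 then
    nth r' (kids E' (emb k' (parent E r v))) (index v (kids E (parent E r v)))
  else r'.

Lemma emb_step k v : dwalk E k.+1 r v -> dwalk E' k r' (emb k (parent E r v)) ->
  E' (emb k (parent E r v)) (emb k.+1 v).
Proof.
move=> Hv Hx; have [Hp Epv] := parent_walk P Hv.
rewrite [emb k.+1 v]/= -mem_kids; apply: mem_nth; rewrite size_kids.
apply: leq_trans (Hdeg Hp Epv Hx); by rewrite -size_kids index_mem mem_kids.
Qed.

Lemma emb_walk k v : dwalk E k r v -> dwalk E' k r' (emb k v).
Proof.
elim: k v => [|k IH] v; first by rewrite !dwalk0.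
move=> Hv; have [Hp _] := parent_walk P Hv; have Hx := IH _ Hp.
by rewrite dwalkS; apply/existsP; exists (emb k (parent E r v)); rewrite Hx emb_step.
Qed.

Lemma emb_edge k v : dwalk E k.+1 r v -> E' (emb k (parent E r v)) (emb k.+1 v).
Proof. move=> Hv; have [Hp _] := parent_walk P Hv; exact: emb_step (emb_walk Hp). Qed.

Lemma emb_inj k v w : dwalk E k r v -> dwalk E k r w -> emb k v = emb k w -> v = w.
Proof.
elim: k v w => [|k IH] v w.
  by rewrite !dwalk0 => /eqP <- /eqP <-.
move=> Hv Hw Heq.
have [Hpv Epv] := parent_walk P Hv; have [Hpw Epw] := parent_walk P Hw.
have e1 := emb_edge Hv; have e2 := emb_edge Hw; rewrite Heq in e1.
have [_ _ Hu'] := P'; have := Hu' _ _ _ e1 e2 => /(IH _ _ Hpv Hpw) pe.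
move: Heq; rewrite /= -pe; set x := emb k (parent E r v) => Heq.
have Hx := emb_walk Hpv.
have iv : index v (kids E (parent E r v)) < size (kids E' x).
  rewrite size_kids; apply: leq_trans (Hdeg Hpv Epv Hx); by rewrite -size_kids index_mem mem_kids.
have iw : index w (kids E (parent E r v)) < size (kids E' x).
  rewrite size_kids; apply: leq_trans (Hdeg Hpv Epv Hx); by rewrite -size_kids index_mem mem_kids pe.
move/eqP: Heq; rewrite nth_uniq ?enum_uniq // => /eqP Hi.
have Hvk : v \in kids E (parent E r v) by rewrite mem_kids.
have Hwk : w \in kids E (parent E r v) by rewrite mem_kids pe.
by rewrite -(nth_index r Hvk) Hi nth_index.
Qed.

End Emb.

Lemma VT_sym ds : symmetric_out_tree (@ER ds) (vroot ds).
Proof.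
split; first exact: ptree_out_tree (VT_ptree ds).
by move=> i u v [Hu _] [Hv _]; rewrite (VT_level Hu) (VT_level Hv).
Qed.

Lemma pow_bound l : 2 ^ l.-1 <= l ^ l.
Proof.
case: l => [|[|l]] //; apply: leq_trans (leq_pexp2l _ (leqnSn _)) _ => //.
by rewrite leq_exp2r.
Qed.

Lemma predn_split x : x = x.-1 + (0 < x).
Proof. case: x => [|x]; first reflexivity. by rewrite ltn0Sn addn1. Qed.

Lemma maxn_pow d : maxn 1 d <= 2 ^ d.-1.
Proof. case: d => [|d] //; rewrite (maxn_idPr _) //; exact: ltn_expl. Qed.

Lemma sum_one_le (I : eqType) (s : seq I) (x : I) (c : nat) :
  uniq s -> \sum_(i <- s | x == i) c <= c.
Proof.
move=> us; rewrite big_mkcond /=.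
case: (boolP (x \in s)) => xs.
  rewrite (bigD1_seq x) //= eqxx big1 ?addn0 // => i /negbTE; by rewrite eq_sym => ->.
rewrite big1_seq // => i /andP[_ iS]; case: eqP => // xi; by move: xs; rewrite xi iS.
Qed.

Theorem mainTheorem18 (V : finType) (E : rel V) (r : V) :
  out_tree E r ->
  exists (V' : finType) (E' : rel V') (r' : V'),
    symmetric_out_tree E' r' /\
    subgraph_of E E' /\
    n_out_leaves E' <= n_out_leaves E ^ n_out_leaves E /\
    #|V'| <= n_out_leaves E ^ n_out_leaves E * #|V|.
Proof.
move=> OT; have P := out_tree_ptree OT; have [Hre _ Hu] := P.
pose depth v := xchoose (Hre v).
have depthP v : dwalk E (depth v) r v := xchooseP (Hre v).
have depthE i v : dwalk E i r v -> depth v = i by move=> H; exact: ptree_uniq P (depthP v) H.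
set n := #|V|.
have n0 : 0 < n by apply/card_gt0P; exists r.
have depth_lt v : depth v < n.
  have : {subset iota 0 (depth v).+1 <= codom depth}.
    move=> i; rewrite mem_iota add0n ltnS => Hi; apply/codomP.
    have := depthP v; rewrite -(subnKC Hi) => /dwalk_add[u [Hu1 _]].
    by exists u; rewrite (depthE _ _ Hu1).
  by move/(uniq_leq_size (iota_uniq _ _)); rewrite size_iota size_codom.
pose d i := \max_(v | depth v == i) outdeg E v.
pose ds := [seq maxn 1 (d i) | i <- iota 0 n.-1].
have dpos : all (fun x => 0 < x) ds.
  by rewrite all_map; apply/allP => i _ /=; rewrite leq_max.
pose E' := @ER ds; pose r' := vroot ds.
have P' : ptree E' r' := VT_ptree ds.
have Hdeg : forall k u w x, dwalk E k r u -> E u w -> dwalk E' k r' x ->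
    outdeg E u <= outdeg E' x.
  move=> k u w x Hu1 Euw Hx; rewrite (VT_level Hx).
  have Hw : dwalk E k.+1 r w by rewrite dwalkS; apply/existsP; exists u; rewrite Hu1 Euw.
  have kn : k < n.-1 by have := depth_lt w; rewrite (depthE _ _ Hw); lia.
  rewrite (nth_map 0) ?size_iota // nth_iota // add0n.
  apply: leq_trans (leq_maxr _ _); apply: leq_bigmax_cond; by rewrite (depthE _ _ Hu1).
pose f v := emb E E' r r' (depth v) v.
have fwalk v : dwalk E' (depth v) r' (f v) := emb_walk P Hdeg (depthP v).
set l := n_out_leaves E.
have S1 : \sum_v (outdeg E v).-1 + (n - l) = n - 1.
  have [_ [[_ Hn] _]] := OT; rewrite -Hn n_edges_out.
  have -> : n - l = \sum_v (0 < outdeg E v : nat).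
    rewrite -card_sumE /l /n_out_leaves.
    have -> : [set v | 0 < outdeg E v] = ~: out_leaves E.
      by apply/setP => v; rewrite !inE lt0n.
    by have := cardsC (out_leaves E); rewrite /n; lia.
  rewrite [RHS](eq_bigr (fun v => (outdeg E v).-1 + (0 < outdeg E v))) ?big_split //; move=> v _; exact: predn_split.
have S2 i : (d i).-1 <= \sum_(v | depth v == i) (outdeg E v).-1.
  case: (pickP (fun v => depth v == i)) => [v0 Hv0|none].
    have cpos : 0 < #|[pred v | depth v == i]| by apply/card_gt0P; exists v0.
    have [v1 Hv1 Hm] := eq_bigmax_cond (outdeg E) cpos.
    have -> : d i = outdeg E v1 by rewrite -Hm.
    by rewrite (bigD1 v1) //= leq_addr.
  by rewrite /d big_pred0.
have S3 : \sum_(i <- iota 0 n.-1) (d i).-1 <= l.-1.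
  apply: (@leq_trans (\sum_(i <- iota 0 n.-1) \sum_(v | depth v == i) (outdeg E v).-1)).
    by apply: leq_sum => i _; exact: S2.
  rewrite (exchange_big_dep xpredT) //=.
  have ln : l <= n by exact: max_card.
  apply: (@leq_trans (\sum_v (outdeg E v).-1)); last by lia.
  apply: leq_sum => v _; exact: sum_one_le (iota_uniq _ _).
have Hprod : \prod_(x <- ds) x <= l ^ l.
  rewrite big_map; apply: leq_trans (leq_prod (fun i _ => maxn_pow (d i))) _.
  rewrite -expn_sum; apply: leq_trans (pow_bound l); exact: leq_pexp2l.
exists (VT ds), E', r'; split; first exact: VT_sym.
split.
  exists f; split.
    move=> v w Hf; have Hd : depth v = depth w.
      by apply: ptree_uniq P' (fwalk v) _; rewrite Hf; exact: fwalk.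
    apply: (emb_inj P P' Hdeg (depthP v)); first by rewrite Hd; exact: depthP.
    by move: Hf; rewrite /f Hd.
  move=> u v Euv.
  have Hv : dwalk E (depth u).+1 r v by rewrite dwalkS; apply/existsP; exists u; rewrite depthP Euv.
  have [_ Epv] := parent_walk P Hv.
  have pu : parent E r v = u by exact: Hu Epv Euv.
  rewrite /f (depthE _ _ Hv); have := emb_edge P Hdeg Hv; by rewrite pu.
split; first exact: leq_trans (VT_leaves dpos) Hprod.
apply: leq_trans (VT_card dpos) _.
rewrite size_map size_iota prednK // mulnC; exact: leq_mul.
Qed.
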